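(* Let $\mathbf{F}$ be a field of characteristic $3$, let $\lambda=(\lambda_1,\lambda_2)$ be a partition, $m=\lambda_1-\lambda_2$, and let $g\in\mathbf{N}_0$ with $B(m,g)\not\equiv0\pmod3$. Then in $S_\mathbf{F}(\lambda)$ \[e_{m,g}=B(m,g)\,b(g)+\sum_{i>g}\alpha_i b(i)\] for some $\alpha_i\in\mathbf{F}_3$. In particular $e_{m,g}\neq0$ in $S_\mathbf{F}(\lambda)$ if and only if $g\le\lambda_2$.
   Context: $S_\mathbf{F}(\lambda)=\operatorname{End}_{\mathbf{F}S_r}(M^\lambda)$ is a commutative $\mathbf{F}$-algebra with basis $b(0)=\mathbf{1},\dots,b(\lambda_2)$ and multiplication $b(i)b(j)=\sum_{h=\max\{i,j\}}^{i+j}\binom{h}{i}\binom{h}{j}\binom{m+i+j}{i+j-h}b(h)$, $b(a)=0$ for $a>\lambda_2$. $B(m,g)=\binom{m+2g}{g}$. With base-3 digits $(m+2g)_u,g_u$, let $I^{(0)}=\{u: g_u=0,(m+2g)_u=0\}$, $J^{(0)}=\{u:g_u=1,(m+2g)_u=2\}$, $I^{(1)}=\{u:g_u=0,(m+2g)_u=1\}$, $J^{(1)}=\{u:g_u=2,(m+2g)_u=2\}$, $I^{(2)}=\{u:g_u=0,(m+2g)_u=2\}$, $J^{(2)}=\{u:g_u=1,(m+2g)_u=1\}$ and \[e_{m,g}=\prod_{u\in I^{(0)}}(\mathbf{1}+b(3^u)-b(2\cdot3^u))\prod_{u\in J^{(0)}}(b(2\cdot3^u)-b(3^u))\prod_{u\in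 I^{(1)}}(\mathbf{1}-b(2\cdot3^u))\prod_{u\in J^{(1)}}b(2\cdot3^u)\prod_{u\in I^{(2)}}(\mathbf{1}-b(3^u)+b(2\cdot3^u))\prod_{u\in J^{(2)}}(b(3^u)-b(2\cdot3^u)),\] with $b(a)=0$ for $a>\lambda_2$. Here $B(m,g)$ is read as an element of $\mathbf{F}_3\subseteq\mathbf{F}$. *)

(* Defs.v *)
From HB Require Import structures.
From mathcomp Require Import all_boot all_order all_algebra.
Set Implicit Arguments. Unset Strict Implicit. Unset Printing Implicit Defensive.
Import Order.TTheory GRing.Theory Num.Theory.
Local Open Scope ring_scope.

(* The algebra S_F(lambda), lambda = (l1, l2), m = l1 - l2, is modelled on
   row vectors 'rV[F]_(l2.+1): coordinate h is the coefficient of b(h). *)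

(* structure constant: coefficient of b(h) in b(i) b(j) *)
Definition Sconst (m i j h : nat) : nat :=
  if (maxn i j <= h <= i + j)%N
  then ('C(h, i) * 'C(h, j) * 'C(m + i + j, i + j - h))%N else 0%N.

Section Schur.
Variables (F : fieldType) (m n : nat).  (* n = lambda_2 *)

Definition Selt := 'rV[F]_n.+1.

(* basis element b(a); equal to 0 when a > lambda_2 *)
Definition bS (a : nat) : Selt := \row_(h < n.+1) ((h : nat) == a)%:R.

Definition Smul (x y : Selt) : Selt :=
  \row_(h < n.+1) \sum_(i < n.+1) \sum_(j < n.+1)
     x 0 i * y 0 j * (Sconst m i j h)%:R.

End Schur.

Definition dig3 (u x : nat) : nat := (x %/ 3 ^ u) %% 3.

Definition Bmg (m g : nat) : nat := 'C(m + 2 * g, g).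

Definition efactor (F : fieldType) (m n g u : nat) : Selt F n :=
  let b := bS F n in
  let a := dig3 u (m + 2 * g) in
  let c := dig3 u g in
  if (c == 0%N) && (a == 0%N) then b 0%N + b (3 ^ u)%N - b (2 * 3 ^ u)%N
  else if (c == 1%N) && (a == 2%N) then b (2 * 3 ^ u)%N - b (3 ^ u)%N
  else if (c == 0%N) && (a == 1%N) then b 0%N - b (2 * 3 ^ u)%N
  else if (c == 2%N) && (a == 2%N) then b (2 * 3 ^ u)%N
  else if (c == 0%N) && (a == 2%N) then b 0%N - b (3 ^ u)%N + b (2 * 3 ^ u)%N
  else if (c == 1%N) && (a == 1%N) then b (3 ^ u)%N - b (2 * 3 ^ u)%N
  else b 0%N. (* never occurs when 3 does not divide B(m,g) (Lucas) *)

(* e_{m,g}: product over digit positions u < m+2g+l2+1; for larger u both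
   digits are 0 and 3^u > l2, so the factor is 1 + 0 - 0 = 1. *)
Definition e_mg (F : fieldType) (m n g : nat) : Selt F n :=
  foldr (@Smul F m n) (bS F n 0) [seq efactor F m n g u | u <- iota 0 (m + 2 * g + n).+1].

(* Main.v *)
Require Import Defs.
From HB Require Import structures.
From mathcomp Require Import all_boot all_order all_algebra zify ring.
Import Order.TTheory GRing.Theory Num.Theory.


Lemma lucas3 n k : 'C(n,k) %% 3 = ('C(n %/ 3, k %/ 3) * 'C(n %% 3, k %% 3)) %% 3.
Proof.
elim: n k => [|n IH] k.
  case: k => [|k]; first by [].
  rewrite bin0n /= !bin0n.
  have: (k.+1 %/ 3 != 0) || (k.+1 %% 3 != 0) by apply/orP; lia.
  by case/orP=> /negPf ->; rewrite ?muln0 ?mul0n.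
case: k => [|k]; first by rewrite !bin0.
rewrite binS -modnDm IH IH modnDm.
have hn : n = 3 * (n %/ 3) + n %% 3 by lia.
have hk : k = 3 * (k %/ 3) + k %% 3 by lia.
have hr : n %% 3 < 3 by lia. have ht : k %% 3 < 3 by lia.
set q := n %/ 3 in hn *; set r := n %% 3 in hn hr *; set s := k %/ 3 in hk *; set t := k %% 3 in hk ht *; clearbody q r s t.
have [r0|[r1|r2]] : r = 0 \/ r = 1 \/ r = 2 by lia.
all: have [t0|[t1|t2]] : t = 0 \/ t = 1 \/ t = 2 by lia.
all: first [have e1 : n.+1 %/ 3 = q by lia | have e1 : n.+1 %/ 3 = q.+1 by lia].
all: first [have e2 : n.+1 %% 3 = r.+1 by lia | have e2 : n.+1 %% 3 = 0 by lia].
all: first [have e3 : k.+1 %/ 3 = s by lia | have e3 : k.+1 %/ 3 = s.+1 by lia].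
all: first [have e4 : k.+1 %% 3 = t.+1 by lia | have e4 : k.+1 %% 3 = 0 by lia].
all: rewrite e1 e2 e3 e4 ?r0 ?r1 ?r2 ?t0 ?t1 ?t2 /= ?binS ?bin0 ?bin0n /=; lia.
Qed.



Lemma expn3_gt0 k : 0 < 3 ^ k. Proof. by rewrite expn_gt0. Qed.

Lemma Lk k : forall X R Y, R < 3 ^ k -> 'C(3^k * X + R, 3^k * Y) %% 3 = 'C(X, Y) %% 3.
Proof.
elim: k => [|k IH] X R Y hR.
  have -> : R = 0 by rewrite expn0 in hR; lia.
  by rewrite expn0 !mul1n addn0.
rewrite lucas3 expnSr -!mulnA [3 * X]mulnC [3 * Y]mulnC !mulnA.
rewrite divnMDl // modnMDl mulnK // modnMl bin0 muln1.
apply: IH; rewrite ltn_divLR //; by rewrite -expnSr.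
Qed.

Lemma Gk k a q d : a < 3 -> d <= a * 3^k ->
  'C(3^k.+1 * q + d, a * 3^k) %% 3 = (d == a * 3^k) %% 3.
Proof.
move=> ha hd.
have K0 := expn3_gt0 k.
set K := 3 ^ k in hd K0 *.
have hdK : d = K * (d %/ K) + d %% K by rewrite mulnC -divn_eq.
have he : d %/ K <= a.
  by apply: (leq_trans (leq_div2r K hd)); rewrite mulnK.
have -> : 3^k.+1 * q + d = K * (3 * q + d %/ K) + d %% K.
  by rewrite {1}hdK expnS -/K; ring.
rewrite [a * K]mulnC Lk; last by rewrite ltn_mod.
rewrite lucas3.
have -> : (3 * q + d %/ K) %/ 3 = q by move: he; move: (d %/ K) => e he; lia.
have -> : (3 * q + d %/ K) %% 3 = d %/ K by move: he; move: (d %/ K) => e he; lia.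
have -> : a %/ 3 = 0 by lia.
have -> : a %% 3 = a by lia.
rewrite bin0 mul1n.
case: (ltngtP (d %/ K) a) => h.
- rewrite bin_small //.
  have : d != K * a.
    apply/eqP => E; move: h; rewrite E mulKn //; lia.
  by move/negPf ->.
- lia.
- rewrite h binn.
  have -> : d == K * a.
    apply/eqP; apply/eqP; rewrite eqn_leq; apply/andP; split; first by rewrite mulnC.
    by rewrite -h mulnC leq_trunc_div.
  by [].
Qed.


Lemma Sconst_key (F : fieldType) (h3 : (3 \in [pchar F]%R)) m k a j h :
  a < 3 -> j %% 3^k.+1 = 0 ->
  ((Sconst m (a*3^k)%N j h)%:R = (h == (j + a*3^k)%N)%:R :> F)%R.
Proof.
move=> ha hj.
have hjq : j = 3^k.+1 * (j %/ 3^k.+1) by rewrite mulnC {1}(divn_eq j (3^k.+1)) hj addn0.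
set i := a * 3^k.
rewrite /Sconst.
case: ifP => hr.
  case/andP: hr => hr1 hr2.
  case E: (h == j + i).
    rewrite (eqP E) [i + j]addnC subnn bin0 muln1.
    have -> : 'C(j + i, j) = 'C(j + i, i).
      by rewrite -{2}(addnK i j) bin_sub // leq_addl.
    have hC : 'C(j + i, i) %% 3 = 1 by rewrite {1}hjq Gk // eqxx.
    by rewrite natrM -(GRing.natr_mod_pchar h3 ('C(j + i, i))) hC GRing.mulr1.
  rewrite !natrM -(GRing.natr_mod_pchar h3 ('C(h, i))).
  have hjh : j <= h by move: hr1; rewrite geq_max => /andP[].
  have -> : h = j + (h - j) by rewrite subnKC.
  rewrite {1}hjq Gk //; last by move: hr2; rewrite addnC; lia.
  have -> : (h - j == i) = false.
    by apply/negbTE; apply: contraFN E => /eqP <-; rewrite subnKC.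
  by rewrite /= !GRing.mul0r.
case E: (h == j + i) => //.
move/negbT: hr; rewrite (eqP E) geq_max leq_addl leq_addr addnC leqnn.
by [].
Qed.


Definition ccd (F : fieldType) (G A a : nat) : F :=
  let t : F * F * F :=
   if (G == 0) && (A == 0) then ((1)%R, (1)%R, (-1)%R)
   else if (G == 1) && (A == 2) then ((0)%R, (-1)%R, (1)%R)
   else if (G == 0) && (A == 1) then ((1)%R, (0)%R, (-1)%R)
   else if (G == 2) && (A == 2) then ((0)%R, (0)%R, (1)%R)
   else if (G == 0) && (A == 2) then ((1)%R, (-1)%R, (1)%R)
   else if (G == 1) && (A == 1) then ((0)%R, (1)%R, (-1)%R)
   else (1%R, 0%R, 0%R) in
  if a == 0 then t.1.1 else if a == 1 then t.1.2 else t.2.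

Definition cc (F : fieldType) m g u a : F :=
  ccd F (dig3 u g) (dig3 u (m + 2 * g)) a.

Lemma efactor_entry (F : fieldType) m n g u (i : 'I_n.+1) :
  efactor F m n g u 0%R i =
    (\sum_(a < 3) cc F m g u a * (nat_of_ord i == (nat_of_ord a * 3 ^ u)%N)%:R)%R.
Proof.
rewrite /efactor /cc /ccd !big_ord_recr big_ord0 /=.
move: (dig3 u g) (dig3 u (m + 2 * g)) => G A.
rewrite mul0n mul1n.
case: ifP => _; first by rewrite !mxE /=; ring.
case: ifP => _; first by rewrite !mxE /=; ring.
case: ifP => _; first by rewrite !mxE /=; ring.
case: ifP => _; first by rewrite !mxE /=; ring.
case: ifP => _; first by rewrite !mxE /=; ring.
case: ifP => _; first by rewrite !mxE /=; ring.
by rewrite !mxE /=; ring.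
Qed.


Lemma ntsel (F : fieldType) (Q : nat -> F) k a h : a < 3 ->
  (if a * 3^k <= h then
     (if (h - a*3^k) %% 3^k.+1 == 0 then Q ((h - a*3^k) %/ 3^k.+1) else 0%R) else 0%R)
  = if (h %% 3^k == 0) && ((h %/ 3^k) %% 3 == a) then Q ((h %/ 3^k) %/ 3) else 0%R.
Proof.
move=> ha.
have K0 := expn3_gt0 k.
rewrite expnSr.
move: K0; set K := 3 ^ k; clearbody K => K0.
have hd := divn_eq h K.
have hr := ltn_pmod h K0.
move: hd hr; set x := h %/ K; set r := h %% K; clearbody x r => hd hr.
case: (leqP (a * K) h) => haK.
- have ax : a <= x.
    have : a * K < x.+1 * K by rewrite mulSn; lia.
    by rewrite ltn_mul2r K0 /= ltnS.
  have aKx : a * K <= x * K by rewrite leq_mul2r ax orbT.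
  have hsub : h - a * K = (x - a) * K + r by rewrite mulnBl; lia.
  rewrite hsub.
  case: (eqVneq r 0) => [r0|rn0].
  + rewrite r0 addn0 /= [(x - a) * K]mulnC -muln_modr divnMl // muln_eq0.
    rewrite (negPf (lt0n_neq0 K0)) /=.
    have -> : ((x - a) %% 3 == 0) = (x %% 3 == a).
      by apply/idP/idP => /eqP ?; apply/eqP; lia.
    case: ifP => // /eqP xa.
    by have -> : (x - a) %/ 3 = x %/ 3 by lia.
  + rewrite /=.
    have : ~~ (K * 3 %| (x - a) * K + r).
      apply/negP => hdv.
      have : K %| (x - a) * K + r := dvdn_trans (dvdn_mulr 3 (dvdnn K)) hdv.
      rewrite dvdn_addr ?dvdn_mull // => hKr.
      have r0 : 0 < r by rewrite lt0n.
      have := dvdn_leq r0 hKr; lia.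
    by rewrite /dvdn => /negPf ->.
- case: ifP => // /andP [/eqP r0 /eqP xa].
  have ax : a <= x by lia.
  have : a * K <= x * K by rewrite leq_mul2r ax orbT.
  lia.
Qed.


Lemma sum_pick1 (F : fieldType) n (T : nat -> F) v :
  (\sum_(i < n.+1) (nat_of_ord i == v)%:R * T i = if (v < n.+1)%N then T v else 0)%R.
Proof.
case: ifP => hv.
  rewrite (bigD1 (Ordinal hv)) //= eqxx mul1r big1 ?addr0 // => i hi.
  have : nat_of_ord i != v by apply: contra hi => /eqP E; apply/eqP/val_inj.
  by move/negPf ->; rewrite mul0r.
rewrite big1 // => i _.
have : nat_of_ord i != v by apply/eqP => E; move: (ltn_ord i); rewrite E hv.
by move/negPf ->; rewrite mul0r.
Qed.

Lemma sum_pick2 (F : fieldType) n (Qn : nat -> F) h d : h < n.+1 ->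
  (\sum_(j < n.+1) Qn j * (h == (j + d)%N)%:R = if (d <= h)%N then Qn (h - d)%N else 0)%R.
Proof.
move=> hn.
case: ifP => hd.
  have hl : h - d < n.+1 by lia.
  rewrite (bigD1 (Ordinal hl)) //= subnK // eqxx mulr1 big1 ?addr0 // => i hi.
  have : h != i + d.
    apply: contra hi => /eqP E; apply/eqP/val_inj => /=; lia.
  by move/negPf ->; rewrite mulr0.
rewrite big1 // => i _.
have : h != i + d by apply/eqP => E; move: hd; rewrite E leq_addl.
by move/negPf ->; rewrite mulr0.
Qed.


Lemma step (F : fieldType) (h3 : 3 \in [pchar F]%R) m n g k (P : Selt F n) (Q : nat -> F)
  (hP : forall j : 'I_n.+1, P 0%R j = if j %% 3^k.+1 == 0 then Q (j %/ 3^k.+1) else 0%R)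
  (h : 'I_n.+1) :
  (@Smul F m n (efactor F m n g k) P) 0%R h =
    if h %% 3^k == 0 then (cc F m g k ((h %/ 3^k) %% 3)%N * Q ((h %/ 3^k) %/ 3)%N)%R else 0%R.
Proof.
rewrite mxE.
pose Qn j := if j %% 3^k.+1 == 0 then Q (j %/ 3^k.+1) else 0%R.
pose T i := (\sum_(j < n.+1) Qn j * (Sconst m i j h)%:R)%R.
have E1 : (\sum_(i < n.+1) \sum_(j < n.+1)
     efactor F m n g k 0%R i * P 0%R j * (Sconst m i j h)%:R =
     \sum_(i < n.+1) efactor F m n g k 0%R i * T i)%R.
  apply: eq_bigr => i _; rewrite /T big_distrr; apply: eq_bigr => j _.
  by rewrite hP -mulrA.
rewrite E1.
have E2 : (\sum_(i < n.+1) efactor F m n g k 0%R i * T i =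
    \sum_(a < 3) cc F m g k a * (if (a * 3^k < n.+1)%N then T (a * 3^k)%N else 0))%R.
  under eq_bigr => i _ do rewrite efactor_entry big_distrl /=.
  rewrite exchange_big; apply: eq_bigr => a _.
  rewrite -sum_pick1 big_distrr; apply: eq_bigr => i _ /=.
  by rewrite mulrA.
rewrite E2.
have E3 a : a < 3 -> (if a * 3^k < n.+1 then T (a * 3^k) else 0%R) =
    if a * 3^k <= h then Qn (h - a * 3^k) else 0%R.
  move=> ha.
  have -> : T (a * 3^k) = (\sum_(j < n.+1) Qn j * (nat_of_ord h == (j + a * 3^k)%N)%:R)%R.
    apply: eq_bigr => j _; rewrite /Qn; case: ifP => hj.
      by rewrite Sconst_key //; apply/eqP.
    by rewrite !mul0r.
  rewrite sum_pick2 //.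
  case: ifP => // hn.
  have : ~~ (a * 3^k <= h).
    by rewrite -ltnNge; apply: (leq_trans (ltn_ord h)); rewrite leqNgt hn.
  by move/negPf ->.
have T0 : T 0 = (if (h %% 3^k == 0) && ((h %/ 3^k) %% 3 == 0) then Q ((h %/ 3^k) %/ 3) else 0%R).
  by have := E3 0 isT; rewrite /Qn; cbv beta; rewrite (ntsel F Q k 0 h) // mul0n ltn0Sn.
rewrite !big_ord_recr big_ord0 !E3 // /Qn !ntsel //= mul0n T0.
move: (h %/ 3^k) => x.
case: (h %% 3^k == 0) => /=; last by rewrite !mulr0 !addr0.
have [x0|[x1|x2]] : x %% 3 = 0 \/ x %% 3 = 1 \/ x %% 3 = 2 by lia.
all: rewrite ?x0 ?x1 ?x2 /= ?mulr0 ?add0r ?addr0 //.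
Qed.


Fixpoint EE (F : fieldType) m g (k j x : nat) {struct j} : F :=
  match j with
  | 0 => ((x == 0 : nat)%:R)%R
  | j'.+1 => (cc F m g k (x %% 3) * EE F m g k.+1 j' (x %/ 3))%R
  end.

Lemma fold_main (F : fieldType) (h3 : 3 \in [pchar F]%R) m n g j : forall k (h : 'I_n.+1),
  (foldr (@Smul F m n) (bS F n 0) [seq efactor F m n g u | u <- iota k j]) 0%R h
  = if h %% 3^k == 0 then EE F m g k j (h %/ 3^k) else 0%R.
Proof.
elim: j => [|j IH] k h /=.
  rewrite mxE; case: ifP => hm.
    have hd := divn_eq h (3^k); rewrite (eqP hm) addn0 in hd.
    by rewrite {1}hd muln_eq0 expn_eq0 /= orbF.
  case: eqP => // h0; by rewrite h0 mod0n in hm.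
by rewrite (@step F h3 m n g k _ (EE F m g k.+1 j) (IH k.+1)).
Qed.

Lemma m1_2 (F : fieldType) (h3 : 3 \in [pchar F]%R) : (-1 = 2%:R :> F)%R.
Proof.
have h : ((3%:R : F) = 0)%R := GRing.pcharf0 h3.
have : ((2%:R : F) = 3%:R - 1)%R by rewrite !mulrS; ring.
by rewrite h sub0r => ->.
Qed.

Lemma ccd_low (F : fieldType) G A a : G <= A -> A < 3 -> a < G -> ccd F G A a = 0%R.
Proof.
by case: A => [|[|[|A]]] //; case: G => [|[|[|G]]] //; case: a => [|[|[|a]]].
Qed.

Lemma ccd_diag (F : fieldType) (h3 : 3 \in [pchar F]%R) G A : G <= A -> A < 3 ->
  ccd F G A G = ('C(A, G))%:R%R.
Proof.
case: A => [|[|[|A]]] //; case: G => [|[|[|G]]] // _ _; rewrite /ccd /= ?bin0 ?binn //.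
by rewrite m1_2.
Qed.

Lemma ccd_nat (F : fieldType) (h3 : 3 \in [pchar F]%R) G A a : exists t : nat, ccd F G A a = t%:R%R.
Proof.
have H0 : exists t : nat, (0%R : F) = t%:R%R by exists 0%N.
have H1 : exists t : nat, (1 : F)%R = t%:R%R by exists 1%N.
have Hm : exists t : nat, (-1 : F)%R = t%:R%R by exists 2%N; exact: m1_2.
rewrite /ccd /=; repeat (case: ifP => _); simpl.
all: first [exact H0 | exact H1 | exact Hm].
Qed.


Lemma dig3_lt u x : dig3 u x < 3.
Proof. by rewrite /dig3 ltn_mod. Qed.

Lemma EE_nat (F : fieldType) (h3 : 3 \in [pchar F]%R) m g j :
  forall k x, exists t : nat, EE F m g k j x = t%:R%R.
Proof.
elim: j => [|j IH] k x /=; first by exists (x == 0 : nat).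
rewrite /cc.
have [t1 ->] := ccd_nat F h3 (dig3 k g) (dig3 k (m + 2 * g)) (x %% 3).
have [t2 ->] := IH k.+1 (x %/ 3).
by exists (t1 * t2)%N; rewrite natrM.
Qed.

Lemma EE_low (F : fieldType) (h3 : 3 \in [pchar F]%R) m g j : forall k,
  g %/ 3^(k + j) = 0 -> (m + 2 * g) %/ 3^(k + j) = 0 ->
  ~~ (3 %| 'C((m + 2 * g) %/ 3^k, g %/ 3^k)) ->
  (forall x, x < g %/ 3^k -> EE F m g k j x = 0%R) /\
  EE F m g k j (g %/ 3^k) = ('C((m + 2 * g) %/ 3^k, g %/ 3^k))%:R%R.
Proof.
elim: j => [|j IH] k.
  rewrite addn0 => -> -> _; split=> // x; by rewrite ltn0.
rewrite -addSnnS => hg hA hC.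
move: hC; set A := m + 2 * g => hC.
have eg : g %/ 3 ^ k.+1 = (g %/ 3^k) %/ 3 by rewrite expnSr divnMA.
have eA : A %/ 3 ^ k.+1 = (A %/ 3^k) %/ 3 by rewrite expnSr divnMA.
have hL := lucas3 (A %/ 3^k) (g %/ 3^k).
have hC1 : ~~ (3 %| 'C(A %/ 3 ^ k.+1, g %/ 3 ^ k.+1)).
  apply: contra hC; rewrite eg eA /dvdn hL => /eqP h0.
  by rewrite -modnMml h0.
have hC2 : ~~ (3 %| 'C((A %/ 3^k) %% 3, (g %/ 3^k) %% 3)).
  apply: contra hC; rewrite /dvdn hL => /eqP h0.
  by rewrite -modnMmr h0 muln0.
have hGA : (g %/ 3^k) %% 3 <= (A %/ 3^k) %% 3.
  rewrite leqNgt; apply: contra hC2 => hlt; by rewrite bin_small.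
have [IH1 IH2] := IH k.+1 hg hA hC1.
rewrite /= /cc.
have -> : dig3 k g = (g %/ 3^k) %% 3 by [].
have -> : dig3 k (m + 2 * g) = (A %/ 3^k) %% 3 by [].
split.
  move=> x hx.
  have : x %/ 3 <= (g %/ 3^k) %/ 3 by apply: leq_div2r; exact: ltnW.
  rewrite leq_eqVlt => /orP [/eqP ex|lx]; last by rewrite -eg in lx; rewrite IH1 ?mulr0.
  have hlt : x %% 3 < (g %/ 3^k) %% 3.
    by move: hx ex; move: (g %/ 3^k) => y; clear; lia.
  by rewrite ccd_low ?mul0r // ltn_mod.
rewrite ccd_diag // ?ltn_mod // -eg IH2 -natrM.
rewrite eg eA mulnC -(GRing.natr_mod_pchar h3 (_ * _)) -hL.
by rewrite (GRing.natr_mod_pchar h3).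
Qed.


Lemma sum_range (F : fieldType) (al : nat -> F) g n h : h < n.+1 ->
  (\sum_(g.+1 <= i < n.+1) al i * (h == i)%:R = if (g < h)%N then al h else 0)%R.
Proof.
move=> hn.
case: ifP => hg.
  rewrite (bigD1_seq h) /=; last by apply: iota_uniq.
    rewrite eqxx mulr1 big1_seq ?addr0 // => i /andP [hi _].
    by rewrite eq_sym (negPf hi) mulr0.
  by rewrite mem_index_iota; apply/andP.
rewrite big1_seq // => i /andP [_ hi].
move: hi; rewrite mem_index_iota => /andP [hi _].
have : h != i by apply/eqP => E; move: hg; rewrite E hi.
by move/negPf ->; rewrite mulr0.
Qed.

Local Open Scope ring_scope.

Theorem lemma3p3 (F : fieldType) (h3 : (3 \in [pchar F])%N)
  (l1 l2 : nat) (hl : (l2 <= l1)%N) (g : nat)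
  (hB : ~~ (3 %| Bmg (l1 - l2) g)%N) :
  (exists alpha : nat -> nat,
     e_mg F (l1 - l2) l2 g =
       (Bmg (l1 - l2) g)%:R *: bS F l2 g
       + \sum_(g.+1 <= i < l2.+1) (alpha i)%:R *: bS F l2 i)
  /\ (e_mg F (l1 - l2) l2 g != 0 <-> (g <= l2)%N).
Proof.
move: hB; rewrite /Bmg.
set m := (l1 - l2)%N; set n := l2 => hB.
set N1 := ((m + 2 * g + n).+1)%N.
have Hmain : forall h : 'I_n.+1, e_mg F m n g 0%R h = EE F m g 0 N1 h.
  by move=> h; rewrite /e_mg fold_main // expn0 modn1 divn1.
have hN : (N1 < 3 ^ N1)%N by apply: ltn_expl.
have hg0 : (g %/ 3 ^ (0 + N1) = 0)%N by rewrite add0n divn_small //; apply: leq_trans hN; rewrite /N1; lia.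
have hA0 : ((m + 2 * g) %/ 3 ^ (0 + N1) = 0)%N by rewrite add0n divn_small //; apply: leq_trans hN; rewrite /N1; lia.
have := EE_low F h3 m g N1 0 hg0 hA0.
rewrite expn0 !divn1 => /(_ hB) [hlo hdi].
have Hex : forall i, exists t : nat, EE F m g 0 N1 i == t%:R.
  by move=> i; have [t ->] := EE_nat F h3 m g N1 0 i; exists t.
pose alpha i := xchoose (Hex i).
have Hal : forall i, EE F m g 0 N1 i = (alpha i)%:R%R.
  by move=> i; apply/eqP; exact: (xchooseP (Hex i)).
split.
  exists alpha; apply/rowP => h.
  rewrite Hmain !mxE summxE.
  under eq_bigr => i _ do rewrite !mxE.
  rewrite sum_range //.
  case: (ltngtP h g) => hh.
  - by rewrite hlo // mulr0 add0r.
  - by rewrite Hal mulr0 add0r.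
  - by rewrite hh hdi mulr1 addr0.
split.
  move=> hne; rewrite leqNgt; apply/negP => hgn; move/eqP: hne; apply.
  apply/rowP => h; rewrite Hmain mxE hlo //.
  exact: (leq_trans (ltn_ord h)).
move=> hgn; apply/eqP => He.
have := congr1 (fun v : 'rV[F]_n.+1 => v 0%R (Ordinal (hgn : (g < n.+1)%N))) He.
rewrite Hmain mxE.
change (EE F m g 0 N1 g = 0 -> False); rewrite hdi => /eqP.
by rewrite -(GRing.dvdn_pcharf h3) (negPf hB).
Qed.
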